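(* In the setting described in the context, RLO-CCU-SD is feasible if and only if $\sum_{j\in J}a_{ij}\hat{x}_j\ge b_i$ for all $i\in I$ and $\hat{I}\neq\varnothing$.
   Context: Let $I=\{1,\dots,m\}$, $J=\{1,\dots,n\}$. Given are $a_{ij}\in\mathbb{R}$, $b\in\mathbb{R}^m$, index sets $J_i\subseteq J$, nonnegative numbers $\alpha_{ij}$ ($j\in J_i,i\in I$), an observed point $\hat{x}\in\mathbb{R}^n$, a prior $\hat{\Gamma}\in\mathbb{R}^m$ and a norm $\|\cdot\|$ on $\mathbb{R}^m$. For $i\in I$ and $x\in\mathbb{R}^n$ let $j^i_1(x),\dots,j^i_{|J_i|}(x)$ order $J_i$ so that $\alpha_{ij^i_k(x)}|x_{j^i_k(x)}|$ is the $k$-th largest element of $\{\alpha_{ij}|x_j|\}_{j\in J_i}$, and for $\Gamma_i\in[0,|J_i|]$ let $P_i(\Gamma_i,x)=\sum_{k=1}^{\lfloor\Gamma_i\rfloor}\alpha_{ij^i_k(x)}|x_{j^i_k(x)}|+(\Gamma_i-\lfloor\Gamma_i\rfloor)\alpha_{ij^i_{\lceil\Gamma_i\rceil}(x)}|x_{j^i_{\lceil\Gamma_i\rceil}(x)}|$ (last term $0$ for integer $\Gamma_i$). Let $s_i=\sum_{j\in J}a_{ij}\hat{x}_j-b_i$, $\hat{I}=\{i\in I:0\le s_i\le\sum_{j\in J_i}\alpha_{ij}|\hat{x}_j|\}$, and for $i\in\hat{I}$ let $\underline{\Gamma}_i=\min\{\sum_{j\in J_i}w_j:\sum_{j\in J_i}\alpha_{ij}|\hat{x}_j|w_j=s_i,\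 0\le w_j\le1\}$, so $s_i=P_i(\underline{\Gamma}_i,\hat{x})$. Standing assumption: for each $i\in\hat{I}$, $\underline{\Gamma}_i$ is the unique $\Gamma_i\in[0,|J_i|]$ with $s_i=P_i(\Gamma_i,\hat{x})$. The problem RLO-CCU-SD is \[ \min_{\Gamma,c,u,y,z,\pi,\varphi,\lambda,\mu}\ \|\Gamma-\hat{\Gamma}\| \] subject to: $\sum_{j\in J}c_j\hat{x}_j-\sum_{i\in I}b_i\pi_i=0$; $\alpha_{ij}\hat{x}_j+u_{ij}\ge0$ and $-\alpha_{ij}\hat{x}_j+u_{ij}\ge0$ ($j\in J_i,i\in I$); $y_{ij}+z_i\ge u_{ij}$ ($j\in J_i,i\in I$); $\sum_{j\in J}a_{ij}\hat{x}_j-\sum_{j\in J_i}y_{ij}-\Gamma_iz_i\ge b_i$ ($i\in I$); $y_{ij},z_i\ge0$; $0\le\Gamma_i\le|J_i|$ ($i\in I$); $\sum_{i\in I}\pi_i=1$; $\sum_{i\in I}a_{ij}\pi_i+\sum_{i\in I:j\in J_i}\alpha_{ij}(\lambda_{ij}-\mu_{ij})=c_j$ ($j\in J$); $\varphi_{ij}\le\pi_i$ and $\varphi_{ij}=\lambda_{ij}+\mu_{ij}$ ($j\in J_i,i\in I$); $\sum_{j\in J_i}\varphi_{ij}\le\Gamma_i\pi_i$ ($i\in I$); $\pi_i,\varphi_{ij},\lambda_{ij},\mu_{ij}\ge0$ ($j\in J_i,i\in I$). *)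

(* Defs.v *)
From mathcomp Require Import all_boot all_order all_algebra.
From mathcomp Require Import reals.
Set Implicit Arguments. Unset Strict Implicit. Unset Printing Implicit Defensive.
Import Order.TTheory GRing.Theory Num.Theory.
Local Open Scope ring_scope.

(* P_i(G, x): the sum of the floor(G) largest values of alpha_ij |x_j| (j in Ji)
   plus (G - floor G) times the ceil(G)-th largest one (0 if G is an integer). *)
Definition Pfun (R : realType) (n : nat) (Ji : {set 'I_n})
    (al : 'I_n -> R) (x : 'I_n -> R) (G : R) : R :=
  let s := sort (fun u v : R => v <= u) [seq al j * `|x j| | j <- enum Ji] in
  let k := Num.truncn G in
  \sum_(t < k) nth 0 s t + (G - k%:R) * nth 0 s k.

Definition slack (R : realType) (m n : nat) (a : 'I_m -> 'I_n -> R)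
    (b : 'I_m -> R) (xh : 'I_n -> R) (i : 'I_m) : R :=
  \sum_(j < n) a i j * xh j - b i.

Definition in_Ihat (R : realType) (m n : nat) (a : 'I_m -> 'I_n -> R)
    (b : 'I_m -> R) (J : 'I_m -> {set 'I_n}) (al : 'I_m -> 'I_n -> R)
    (xh : 'I_n -> R) (i : 'I_m) : Prop :=
  0 <= slack a b xh i <= \sum_(j in J i) al i j * `|xh j|.

Definition RLO_CCU_SD_feasible (R : realType) (m n : nat)
    (a : 'I_m -> 'I_n -> R) (b : 'I_m -> R) (J : 'I_m -> {set 'I_n})
    (al : 'I_m -> 'I_n -> R) (xh : 'I_n -> R) : Prop :=
  exists (G : 'I_m -> R) (c : 'I_n -> R) (u y : 'I_m -> 'I_n -> R)
         (z pi : 'I_m -> R) (phi lam mu : 'I_m -> 'I_n -> R),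
    [/\ \sum_(j < n) c j * xh j - \sum_(i < m) b i * pi i = 0,
        (forall i j, j \in J i ->
           [/\ al i j * xh j + u i j >= 0, - (al i j * xh j) + u i j >= 0,
               y i j + z i >= u i j & y i j >= 0] /\
           [/\ phi i j <= pi i, phi i j = lam i j + mu i j,
               phi i j >= 0, lam i j >= 0 & mu i j >= 0]),
        (forall i, [/\ \sum_(j < n) a i j * xh j - \sum_(j in J i) y i j
                        - G i * z i >= b i,
                      z i >= 0, 0 <= G i & G i <= #|J i|%:R] /\
                   (\sum_(j in J i) phi i j <= G i * pi i /\ pi i >= 0)),
        \sum_(i < m) pi i = 1 &
        (forall j, \sum_(i < m) a i j * pi i
                   + \sum_(i < m | j \in J i) al i j * (lam i j - mu i j) = c j)].

(* Main.v *)
Require Import Defs.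
From mathcomp Require Import all_boot all_order all_algebra.
From mathcomp Require Import reals.
From mathcomp Require Import ring lra.
From Stdlib Require Import IndefiniteDescription Classical.
Import Order.TTheory GRing.Theory Num.Theory.
Local Open Scope ring_scope.
Lemma min_elt (R : realType) n (S : {set 'I_n}) (v : 'I_n -> R) (j0 : 'I_n) :
  j0 \in S -> exists k0, k0 \in S /\ forall j, j \in S -> v k0 <= v j.
Proof.
move=> Sj0; case: (@arg_minP _ R _ j0 (mem S) v Sj0) => k Sk H.
by exists k; split.
Qed.

Lemma key0 (R : realType) n (v : 'I_n -> R) : forall (k : nat) (S : {set 'I_n}) (t : R),
  #|S| = k -> (forall j, j \in S -> 0 <= v j) -> 0 <= t -> t <= \sum_(j in S) v j ->
  exists (z : R) (w : 'I_n -> R), [/\ 0 <= z, (forall j, j \in S -> 0 <= w j <= 1),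
    (forall j, j \in S -> z < v j -> w j = 1),
    (forall j, j \in S -> v j < z -> w j = 0) & \sum_(j in S) w j * v j = t].
Proof.
elim=> [|k IH] S t cS v0 t0 tle.
  move/eqP: cS; rewrite cards_eq0 => /eqP S0.
  rewrite S0 big_set0 in tle.
  have -> : t = 0 by apply/eqP; rewrite eq_le tle t0.
  exists 0, (fun _ => 0); split => //; rewrite ?S0 ?big_set0 // => j; by rewrite in_set0.
have [j0 Sj0] : exists j0, j0 \in S.
  by apply/set0Pn; rewrite -card_gt0 cS.
have [k0 [Sk0 kmin]] := @min_elt R n S v j0 Sj0.
set S' := S :\ k0.
have cS' : #|S'| = k by move: cS; rewrite (cardsD1 k0) Sk0 => -[].
have sumS : forall F : 'I_n -> R, \sum_(j in S) F j = F k0 + \sum_(j in S') F j.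
  by move=> F; rewrite (big_setD1 k0).
have inS' : forall j, j \in S' -> (j != k0) /\ (j \in S).
  by move=> j; rewrite in_setD1 => /andP.
rewrite sumS in tle.
case: (lerP (\sum_(j in S') v j) t) => hS.
- exists (v k0), (fun j => if j == k0 then (if v k0 == 0 then 0 else (t - \sum_(j in S') v j) / v k0) else 1).
  split.
  + exact: v0.
  + move=> j _; case: (j == k0); last by rewrite ler01 lexx.
    case: eqP => [_|/eqP vne]; first by rewrite lexx ler01.
    have vp : 0 < v k0 by rewrite lt_def vne v0.
    apply/andP; split; first (apply: divr_ge0; lra).
    rewrite ler_pdivrMr // mul1r; lra.
  + move=> j Sj lt; case: eqP => // ejk; by rewrite ejk ltxx in lt.
  + move=> j Sj lt; have := kmin j Sj; lra.
  + rewrite sumS eqxx.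
    have -> : \sum_(j in S') (if j == k0 then (if v k0 == 0 then 0 else (t - \sum_(j in S') v j) / v k0) else 1) * v j = \sum_(j in S') v j.
      apply: eq_bigr => j /inS' [/negPf -> _]; by rewrite mul1r.
    case: eqP => [v00|/eqP vne].
      rewrite v00 in tle; rewrite mul0r add0r; apply/eqP; rewrite eq_le hS; lra.
    rewrite mulfVK //; lra.
- have [z [w [z0 wb w1 w0 ws]]] := IH S' t cS' (fun j hj => v0 j (inS' j hj).2) t0 (ltW hS).
  have zk : v k0 <= z.
    rewrite leNgt; apply/negP => zlt.
    move: ws; rewrite (eq_bigr (fun j => v j)) => [ws|j hj]; first by move: hS; rewrite ws ltxx.
    rewrite w1 ?mul1r //; apply: lt_le_trans zlt (kmin j (inS' j hj).2).
  exists z, (fun j => if j == k0 then 0 else w j); split => //.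
  + move=> j Sj; case: eqP => [_|/eqP ne]; first by rewrite lexx ler01.
    by apply: wb; rewrite in_setD1 ne Sj.
  + move=> j Sj lt; case: eqP => [ejk|/eqP ne]; first by rewrite ejk in lt; lra.
    by apply: w1 => //; rewrite in_setD1 ne Sj.
  + move=> j Sj lt; case: eqP => [//|/eqP ne].
    by apply: w0 => //; rewrite in_setD1 ne Sj.
  + rewrite sumS eqxx mul0r add0r -ws; apply: eq_bigr => j /inS' [/negPf -> _] //.
Qed.
Lemma maxid (R : realType) (v z w : R) : (z < v -> w = 1) -> (v < z -> w = 0) ->
  Num.max 0 (v - z) + w * z = w * v.
Proof.
move=> h1 h0; case: (ltgtP z v) => h.
- rewrite h1 // max_r; lra.
- rewrite h0 // max_l; lra.
- rewrite h max_l; lra.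
Qed.

Lemma exch (R : realType) m n (J : 'I_m -> {set 'I_n}) (F : 'I_m -> 'I_n -> R) :
  \sum_(j < n) \sum_(i < m | j \in J i) F i j = \sum_(i < m) \sum_(j in J i) F i j.
Proof.
under eq_bigr do rewrite big_mkcond.
rewrite exchange_big; apply: eq_bigr => i _; by rewrite [RHS]big_mkcond.
Qed.

Lemma dual_eq (R : realType) (m n : nat)
    (a : 'I_m -> 'I_n -> R) (b : 'I_m -> R) (J : 'I_m -> {set 'I_n})
    (al : 'I_m -> 'I_n -> R) (xh : 'I_n -> R) c pi lam mu :
  (forall j, \sum_(i < m) a i j * pi i
                   + \sum_(i < m | j \in J i) al i j * (lam i j - mu i j) = c j) ->
  \sum_(j < n) c j * xh j - \sum_(i < m) b i * pi i =
  \sum_(i < m) (pi i * slack a b xh i + \sum_(j in J i) al i j * (lam i j - mu i j) * xh j).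
Proof.
move=> H.
have -> : \sum_(j < n) c j * xh j = \sum_(j < n) (\sum_(i < m) a i j * pi i * xh j
   + \sum_(i < m | j \in J i) al i j * (lam i j - mu i j) * xh j).
  apply: eq_bigr => j _; rewrite -H mulrDl !mulr_suml //.
rewrite big_split /= exch exchange_big /= big_split /=.
rewrite /slack.
have -> : \sum_(i < m) pi i * (\sum_(j < n) a i j * xh j - b i) =
  \sum_(i < m) \sum_(j < n) a i j * pi i * xh j - \sum_(i < m) b i * pi i.
  rewrite -sumrB; apply: eq_bigr => i _; rewrite mulrBr mulr_sumr mulrC; congr (_ - _).
  by apply: eq_bigr => j _; rewrite mulrCA mulrA.
lra.
Qed.
Lemma key (R : realType) n (v : 'I_n -> R) (S : {set 'I_n}) (t : R) :
  (forall j, j \in S -> 0 <= v j) -> 0 <= t -> t <= \sum_(j in S) v j ->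
  exists (zw : R * ('I_n -> R)), [/\ 0 <= zw.1, (forall j, j \in S -> 0 <= zw.2 j <= 1),
    (forall j, j \in S -> Num.max 0 (v j - zw.1) + zw.2 j * zw.1 = zw.2 j * v j)
    & \sum_(j in S) zw.2 j * v j = t].
Proof.
move=> v0 t0 tle.
have [z [w [z0 wb w1 w0 ws]]] := @key0 R n v #|S| S t (erefl _) v0 t0 tle.
exists (z, w); split => // j hj; apply: maxid; [exact: w1 | exact: w0].
Qed.

Theorem proposition5 (R : realType) (m n : nat)
    (a : 'I_m -> 'I_n -> R) (b : 'I_m -> R) (J : 'I_m -> {set 'I_n})
    (al : 'I_m -> 'I_n -> R) (xh : 'I_n -> R)
    (hal : forall i j, j \in J i -> 0 <= al i j)
    (huniq : forall i, in_Ihat a b J al xh i ->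
       forall G1 G2 : R, 0 <= G1 <= #|J i|%:R -> 0 <= G2 <= #|J i|%:R ->
         Pfun (J i) (al i) xh G1 = slack a b xh i ->
         Pfun (J i) (al i) xh G2 = slack a b xh i -> G1 = G2) :
  RLO_CCU_SD_feasible a b J al xh <->
  ((forall i, \sum_(j < n) a i j * xh j >= b i) /\
   exists i, in_Ihat a b J al xh i).
Proof.
split.
- move=> [G [c [u [y [z [pi [phi [lam [mu [H1 H2 H3 H4 H5]]]]]]]]]].
  have hb : forall i, b i <= \sum_(j < n) a i j * xh j.
    move=> i; have [[h z0 G0 _] _] := H3 i.
    have : 0 <= \sum_(j in J i) y i j.
      by apply: sumr_ge0 => j hj; have [[_ _ _ ?] _] := H2 i j hj.
    have := mulr_ge0 G0 z0; lra.
  split => //.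
  apply: NNPP => hno.
  have hA : forall i, \sum_(j in J i) al i j * `|xh j| < slack a b xh i.
    move=> i; rewrite ltNge; apply/negP => hle; apply: hno; exists i.
    by rewrite /in_Ihat hle andbT /slack subr_ge0.
  have := @dual_eq R m n a b J al xh c pi lam mu H5; rewrite H1 => H0.
  have hE : forall i, - (pi i * \sum_(j in J i) al i j * `|xh j|) <=
      \sum_(j in J i) al i j * (lam i j - mu i j) * xh j.
    move=> i; rewrite mulr_sumr -sumrN; apply: ler_sum => j hj.
    have [_ [hp hphi hph0 hl hm]] := H2 i j hj.
    have ha := hal i j hj.
    case: (lerP 0 (xh j)) => hx.
      rewrite ger0_norm //.
      have h1 : 0 <= al i j * xh j by apply: mulr_ge0.
      have h2 : 0 <= pi i + lam i j - mu i j by lra.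
      have := mulr_ge0 h1 h2; nra.
    rewrite ltr0_norm //.
    have h1 : 0 <= al i j * - xh j by apply: mulr_ge0; lra.
    have h2 : 0 <= pi i - lam i j + mu i j by lra.
    have := mulr_ge0 h1 h2; nra.
  have hT : forall i, 0 <= pi i * (slack a b xh i - \sum_(j in J i) al i j * `|xh j|).
    move=> i; have [_ [_ ?]] := H3 i; apply: mulr_ge0 => //; have := hA i; lra.
  have hS : \sum_(i < m) pi i * (slack a b xh i - \sum_(j in J i) al i j * `|xh j|) = 0.
    apply/eqP; rewrite eq_le sumr_ge0 // andbT.
    rewrite [X in _ <= X]H0; apply: ler_sum => i _; have := hE i; lra.
  have hz := psumr_eq0P (fun i _ => hT i) hS.
  move: H4; rewrite big1 => [|i _].
    by move/eqP; rewrite eq_sym oner_eq0.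
  have /eqP := hz i isT; rewrite mulf_eq0 => /orP [/eqP //|].
  have := hA i; rewrite subr_eq0 => lt /eqP eq; by move: lt; rewrite eq ltxx.
- move=> [hb [i0 hi0]].
  pose v := fun i j => al i j * `|xh j|.
  pose t := fun i => if i == i0 then slack a b xh i else 0.
  have ex : forall i, exists zw : R * ('I_n -> R), [/\ 0 <= zw.1,
      (forall j, j \in J i -> 0 <= zw.2 j <= 1),
      (forall j, j \in J i -> Num.max 0 (v i j - zw.1) + zw.2 j * zw.1 = zw.2 j * v i j)
      & \sum_(j in J i) zw.2 j * v i j = t i].
    move=> i; apply: (@key R n).
    + by move=> j hj; rewrite /v mulr_ge0 ?hal.
    + rewrite /t; case: eqP => [->|_] //; by case/andP: hi0.
    + rewrite /t; case: eqP => [->|_]; first by case/andP: hi0.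
      by apply: sumr_ge0 => j hj; rewrite /v mulr_ge0 ?hal.
  have [f hf] := functional_choice _ ex.
  pose G := fun i => \sum_(j in J i) (f i).2 j.
  pose pi := fun i : 'I_m => if i == i0 then 1 else (0 : R).
  pose phi := fun i j => pi i * (f i).2 j.
  pose lam := fun i j => if 0 <= xh j then 0 else phi i j.
  pose mu := fun i j => if 0 <= xh j then phi i j else 0.
  pose c := fun j => \sum_(i < m) a i j * pi i
                   + \sum_(i < m | j \in J i) al i j * (lam i j - mu i j).
  have pi0 : forall i, 0 <= pi i by move=> i; rewrite /pi; case: eqP.
  have lmE : forall i j, al i j * (lam i j - mu i j) * xh j = - (phi i j * v i j).
    move=> i j; rewrite /lam /mu /v; case: (lerP 0 (xh j)) => hx.
      rewrite ger0_norm //; ring.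
    rewrite ltr0_norm //; ring.
  exists G, c, v, (fun i j => Num.max 0 (v i j - (f i).1)), (fun i => (f i).1), pi, phi, lam, mu.
  split.
  + rewrite (@dual_eq R m n a b J al xh c pi lam mu) // big1 // => i _.
    under eq_bigr do rewrite lmE.
    rewrite sumrN.
    have [_ _ _ hs] := hf i.
    have -> : \sum_(j in J i) phi i j * v i j = pi i * t i.
      by rewrite -hs mulr_sumr; apply: eq_bigr => j _; rewrite /phi mulrA.
    rewrite /pi /t; case: eqP => _; ring.
  + move=> i j hj; have [z0 wb wm hs] := hf i.
    have ha := hal i j hj.
    have hw := wb j hj.
    have hv : v i j = `|al i j * xh j| by rewrite /v normrM ger0_norm.
    split.
    * split.
      - rewrite hv; have := ler_norm (- (al i j * xh j)); rewrite normrN; lra.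
      - rewrite hv; have := ler_norm (al i j * xh j); lra.
      - have : v i j - (f i).1 <= Num.max 0 (v i j - (f i).1) by rewrite le_max lexx orbT.
        lra.
      - by rewrite le_max lexx.
    * have hp := pi0 i.
      have hph : 0 <= phi i j by rewrite /phi; apply: mulr_ge0 => //; lra.
      split.
      - rewrite /phi; nra.
      - by rewrite /lam /mu; case: ifP => _; rewrite ?add0r ?addr0.
      - exact: hph.
      - by rewrite /lam; case: ifP.
      - by rewrite /mu; case: ifP.
  + move=> i; have [z0 wb wm hs] := hf i.
    split; last split.
    * split => //.
      - have E : \sum_(j in J i) Num.max 0 (v i j - (f i).1) + G i * (f i).1 = t i.
          rewrite /G mulr_suml -big_split /= -hs; apply: eq_bigr => j hj; exact: wm.
        move: E (hb i); rewrite /t /slack; case: eqP => _; lra.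
      - by rewrite /G; apply: sumr_ge0 => j hj; case/andP: (wb j hj).
      - rewrite /G -sum1_card natr_sum; apply: ler_sum => j hj; by case/andP: (wb j hj).
    * by rewrite /phi /G mulr_suml; apply: ler_sum => j _; rewrite mulrC.
    * exact: pi0 i.
  + rewrite /pi -big_mkcond /= big_pred1_eq //.
  + by [].
Qed.
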